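(* Let $G$ be a finite, simple, connected graph with $\dim_{wt}(G)=2$. Then $G$ has no complete vertex of degree more than three.
   Context: $d(x,y)$ is the shortest-path distance. A vertex $v$ is a complete vertex if its neighborhood $N(v)$ induces a complete graph $K_{d(v)}$. A set $W\subseteq V(G)$ is a resolving set if for every two distinct vertices $y,z$ there is $x\in W$ with $d(y,x)\ne d(z,x)$. A set $W$ is a weak total resolving set (WTR-set) if $W$ is resolving and, for every $w\in W$ and every $x\in V(G)\setminus W$, there is $w'\in W\setminus\{w\}$ with $d(x,w')\ne d(w,w')$. $\dim_{wt}(G)$ is the minimum cardinality of a WTR-set. *)

(* Defs.v *)
From mathcomp Require Import all_boot.
Set Implicit Arguments. Unset Strict Implicit. Unset Printing Implicit Defensive.

Definition simple_graph (T : finType) (e : rel T) : Prop :=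
  symmetric e /\ irreflexive e.

Definition connected_graph (T : finType) (e : rel T) : Prop :=
  forall x y : T, connect e x y.

Definition nbhd (T : finType) (e : rel T) (v : T) : {set T} := [set u | e v u].
Definition degree (T : finType) (e : rel T) (v : T) : nat := #|nbhd e v|.

Fixpoint ball (T : finType) (e : rel T) (x : T) (n : nat) : {set T} :=
  match n with
  | 0 => [set x]
  | n'.+1 => ball e x n' :|: [set y | [exists z in ball e x n', e z y]]
  end.

(* shortest-path distance: least n with y in ball x n.  For connected graphs
   the distance is always < #|T|, so the default value #|T| is never used. *)
Definition dist (T : finType) (e : rel T) (x y : T) : nat :=
  \big[minn/#|T|]_(n < #|T| | y \in ball e x n) (n : nat).

Definition complete_vertex (T : finType) (e : rel T) (v : T) : Prop :=
  forall u w, u \in nbhd e v -> w \in nbhd e v -> u != w -> e u w.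

Definition resolving (T : finType) (e : rel T) (W : {set T}) : Prop :=
  forall y z : T, y != z -> exists2 x, x \in W & dist e y x != dist e z x.

Definition wtr_set (T : finType) (e : rel T) (W : {set T}) : Prop :=
  resolving e W /\
  forall w x, w \in W -> x \notin W ->
    exists2 w', w' \in W :\ w & dist e x w' != dist e w w'.

Definition wt_dim_eq (T : finType) (e : rel T) (k : nat) : Prop :=
  (exists W : {set T}, wtr_set e W /\ #|W| = k) /\
  (forall W : {set T}, wtr_set e W -> k <= #|W|).

(* Main.v *)
Require Import Defs.
From mathcomp Require Import all_boot.
Set Implicit Arguments. Unset Strict Implicit. Unset Printing Implicit Defensive.

Lemma dist_le (T : finType) (e : rel T) x y : dist e x y <= #|T|.
Proof.
rewrite /dist; elim/big_ind: _ => //.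
- by move=> m n Hm Hn; rewrite geq_min Hm.
- by move=> i _; apply: ltnW.
Qed.

Lemma dist_attained (T : finType) (e : rel T) x y :
  dist e x y = #|T| \/ y \in ball e x (dist e x y).
Proof.
rewrite /dist; elim/big_ind: _ => //; first by left.
- move=> m n Hm Hn; rewrite /minn; case: ifP => _; by [].
- by move=> i Hi; right.
Qed.

Lemma bigmin_seq_le (I : eqType) (r : seq I) (P : pred I) (F : I -> nat) idx i :
  i \in r -> P i -> \big[minn/idx]_(j <- r | P j) F j <= F i.
Proof.
elim: r => [|j r IH] //= Hi HP; rewrite big_cons.
rewrite inE in Hi; case/orP: Hi => [/eqP <-|Hi].
  by rewrite HP geq_minl.
case: (P j); last exact: IH.
by rewrite geq_min IH ?orbT.
Qed.

Lemma dist_min (T : finType) (e : rel T) x y n :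
  n < #|T| -> y \in ball e x n -> dist e x y <= n.
Proof.
move=> Hn Hy; rewrite /dist.
apply: (@bigmin_seq_le _ _ _ (fun i : 'I_#|T| => nat_of_ord i) _ (Ordinal Hn)) => //.
by rewrite mem_index_enum.
Qed.

Lemma ball_adj (T : finType) (e : rel T) u w n :
  e u w -> ball e w n \subset ball e u n.+1.
Proof.
move=> Huw; elim: n => [|n IH] /=.
  apply/subsetP=> y; rewrite inE => /eqP ->.
  rewrite !inE; apply/orP; right; apply/existsP; exists u.
  by rewrite !inE eqxx Huw.
apply/subsetP=> y; rewrite in_setU => /orP [Hy|].
  by rewrite in_setU (subsetP IH y Hy).
rewrite inE; case/existsP=> z /andP [Hz Hzy].
rewrite in_setU; apply/orP; right.
rewrite inE; apply/existsP; exists z; by rewrite (subsetP IH z Hz) Hzy.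
Qed.

Lemma dist_adj (T : finType) (e : rel T) u w a :
  e u w -> dist e u a <= (dist e w a).+1.
Proof.
move=> Huw; case: (dist_attained e w a) => [->|H].
  by apply: leq_trans (dist_le e u a) _.
have Hu := subsetP (ball_adj (dist e w a) Huw) a H.
case: (ltnP (dist e w a).+1 #|T|) => Hlt.
  exact: dist_min.
exact: leq_trans (dist_le e u a) Hlt.
Qed.

Lemma two_vals (T : finType) (K : {set T}) (f : T -> nat) u0 :
  u0 \in K -> (forall u w, u \in K -> w \in K -> f u <= (f w).+1) ->
  exists m, forall u, u \in K -> f u = m \/ f u = m.+1.
Proof.
move=> Hu0 Hadj.
case: (arg_minnP f Hu0) => m0 Hm0 Hmin.
exists (f m0) => u Hu.
have h1 := Hmin u Hu; have h2 := Hadj u m0 Hu Hm0.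
case: (ltngtP (f u) (f m0)) => H; [|by right; apply/eqP; rewrite eqn_leq h2 H|by left].
by rewrite leqNgt H in h1.
Qed.

Lemma bits_eq m p q : p = m \/ p = m.+1 -> q = m \/ q = m.+1 ->
  (p == m) = (q == m) -> p = q.
Proof.
by case=> ->; case=> -> //=; rewrite ?eqxx eqn_leq ltnn //= => /esym.
Qed.

Theorem theorem3 (T : finType) (e : rel T) :
  simple_graph e -> connected_graph e -> wt_dim_eq e 2 ->
  ~ (exists v : T, complete_vertex e v /\ 3 < degree e v).
Proof.
move=> [Hsym Hirr] _ [[W [[Hres _] HW]] _] [v [Hc Hdeg]].
case/cards2P: (introT eqP HW) => a [b [_ HWab]].
set K := v |: nbhd e v.
have HvK : v \in K by rewrite setU11.
have HK : 4 < #|K|.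
  rewrite /K cardsU1 /nbhd inE Hirr /=.
  by rewrite /degree in Hdeg.
have Hadj : forall x, forall u w, u \in K -> w \in K -> dist e u x <= (dist e w x).+1.
  move=> x u w Hu Hw.
  case: (eqVneq u w) => [->|Huw]; first exact: leqW.
  apply: dist_adj.
  move: Hu Hw; rewrite !inE.
  case/orP=> [/eqP Hu|Hu]; case/orP=> [/eqP Hw|Hw].
  - by move: Huw; rewrite Hu Hw eqxx.
  - by rewrite Hu.
  - by rewrite Hw Hsym.
  - by apply: Hc; rewrite /nbhd ?inE.
case: (@two_vals _ K (fun u => dist e u a) v HvK (Hadj a)) => ma Hma.
case: (@two_vals _ K (fun u => dist e u b) v HvK (Hadj b)) => mb Hmb.
pose h u := (dist e u a == ma, dist e u b == mb).
have Hinj : {in K &, injective h}.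
  move=> u w Hu Hw [Ha Hb]; apply/eqP; apply/negPn/negP => Huw.
  case: (Hres u w Huw) => x; rewrite HWab !inE => /orP [] /eqP -> /eqP [].
  - exact: (bits_eq (Hma u Hu) (Hma w Hw) Ha).
  - exact: (bits_eq (Hmb u Hu) (Hmb w Hw) Hb).
have := card_in_imset Hinj.
have : #|h @: K| <= #|[set: bool * bool]| by apply: subset_leq_card; apply: subsetT.
rewrite cardsT card_prod card_bool => H1 H2.
by rewrite H2 in H1; rewrite ltnNge H1 in HK.
Qed.
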